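(* Let $p>0$, $e\ge 0$ and $\omega\in\mathbb{R}$, and let $\hat{\mathbf p}=(\cos\omega,\sin\omega)$. Let $\mathbf x_1,\mathbf x_2,\mathbf x_3\in\mathbb{R}^2$ be three distinct points of the form $\mathbf x_i=(x_i,y_i)=r_i(\cos\varphi_i,\sin\varphi_i)$ with $1+e\cos(\varphi_i-\omega)>0$ and $$r_i=\frac{p}{1+e\cos(\varphi_i-\omega)}\qquad(i=1,2,3),$$ so that $r_i=\sqrt{x_i^2+y_i^2}>0$ (i.e. the three points lie on the single branch, given by this polar equation, of a conic with a focus at the origin, semi-latus rectum $p$, eccentricity $e$ and periapsis direction $\hat{\mathbf p}$). Define $$\mathbf u_{123}=(r_1+r_2)\begin{bmatrix} r_2x_1-r_1x_2\\ r_2y_1-r_1y_2\\ r_1-r_2\end{bmatrix},\qquad \mathbf v_{123}=(r_1+r_3)\begin{bmatrix} r_3x_1-r_1x_3\\ r_3y_1-r_1y_3\\ r_1-r_3\end{bmatrix},$$ and $\mathbf s=(s_1,s_2,s_3)=\mathbf u_{123}\times\mathbf v_{123}$. Then $s_3\neq 0$, and setting $X=s_1/s_3$, $Y=s_2/s_3$ and $$Z^2=\frac{1}{r_1^2}\Big(1-2Xx_1-2Yy_1-Y^2x_1^2+2XYx_1y_1-X^2y_1^2\Big)$$ (equivalently $Z^2=r_1^{-2}\,\bar{\mathbf x}_1^T M\bar{\mathbf x}_1$ with $\bar{\mathbf x}_1=[x_1;y_1;1]$ and $M=\begin{bmatrix}-Y^2&XY&-X\\ XY&-X^2&-Y\\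 -X&-Y&1\end{bmatrix}$), one has $X^2+Y^2+Z^2>0$, $$p=\frac{1}{\sqrt{X^2+Y^2+Z^2}},\qquad e=\sqrt{\frac{X^2+Y^2}{X^2+Y^2+Z^2}},$$ and, if $e>0$, $\hat{\mathbf p}=(X,Y)/\sqrt{X^2+Y^2}$. Moreover, the three points lie on the conic $\{(x,y): [x;y;1]^T C[x;y;1]=0\}$ with $C=\begin{bmatrix}-(Y^2+Z^2)&XY&-X\\ XY&-(X^2+Z^2)&-Y\\ -X&-Y&1\end{bmatrix}$.
   Context: Points of $\mathbb{R}^2$ are identified with homogeneous coordinates $[x;y;1]$ in the projective plane. The cross product $\times$ is the usual cross product in $\mathbb{R}^3$. The polar equation $r=p/(1+e\cos\theta)$, with $\theta$ the angle from the periapsis direction $\hat{\mathbf p}$, describes a Keplerian orbit (ellipse, parabola, or one branch of a hyperbola) with focus at the origin. *)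

(* Defs.v *)
From Stdlib Require Import Reals.
Open Scope R_scope.

Definition vec3 := (R * R * R)%type.

Definition v1 (v : vec3) : R := fst (fst v).
Definition v2 (v : vec3) : R := snd (fst v).
Definition v3 (v : vec3) : R := snd v.

Definition scale3 (a : R) (v : vec3) : vec3 := (a * v1 v, a * v2 v, a * v3 v).

Definition cross (a b : vec3) : vec3 :=
  (v2 a * v3 b - v3 a * v2 b,
   v3 a * v1 b - v1 a * v3 b,
   v1 a * v2 b - v2 a * v1 b).

Definition dot3 (a b : vec3) : R := v1 a * v1 b + v2 a * v2 b + v3 a * v3 b.

Definition mat3 := (vec3 * vec3 * vec3)%type.
Definition mulmv3 (M : mat3) (v : vec3) : vec3 :=
  (dot3 (fst (fst M)) v, dot3 (snd (fst M)) v, dot3 (snd M) v).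

Definition quad3 (M : mat3) (v : vec3) : R := dot3 v (mulmv3 M v).

Definition hom (x y : R) : vec3 := (x, y, 1).

Definition uvec (xi yi ri xj yj rj : R) : vec3 :=
  scale3 (ri + rj) (rj * xi - ri * xj, rj * yi - ri * yj, ri - rj).

Definition conicC (X Y Z2 : R) : mat3 :=
  ((-(Y^2 + Z2), X * Y, - X),
   (X * Y, -(X^2 + Z2), - Y),
   (- X, - Y, 1)).

(* Main.v *)
Require Import Defs.
From Stdlib Require Import Reals.
Open Scope R_scope.
From Stdlib Require Import Lra Psatz.

Lemma cross_par (u v : vec3) a b q :
  a * v1 u + b * v2 u + q * v3 u = 0 ->
  a * v1 v + b * v2 v + q * v3 v = 0 ->
  v1 (cross u v) * q = v3 (cross u v) * a /\
  v2 (cross u v) * q = v3 (cross u v) * b.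
Proof.
  destruct u as [[u1 u2] u3]; destruct v as [[w1 w2] w3]; unfold cross, v1, v2, v3; simpl.
  intros Hu Hv; split.
  - assert (E : (u2 * w3 - u3 * w2) * q - (u1 * w2 - u2 * w1) * a
             = u2 * (a * w1 + b * w2 + q * w3) - w2 * (a * u1 + b * u2 + q * u3)) by ring.
    rewrite Hu, Hv in E. lra.
  - assert (E : (u3 * w1 - u1 * w3) * q - (u1 * w2 - u2 * w1) * b
             = - u1 * (a * w1 + b * w2 + q * w3) + w1 * (a * u1 + b * u2 + q * u3)) by ring.
    rewrite Hu, Hv in E. lra.
Qed.

Lemma circle3 (c1 s1 c2 s2 c3 s3 : R) :
  c1^2 + s1^2 = 1 -> c2^2 + s2^2 = 1 -> c3^2 + s3^2 = 1 ->
  (c1, s1) <> (c2, s2) -> (c1, s1) <> (c3, s3) -> (c2, s2) <> (c3, s3) ->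
  (c1 - c2) * (s1 - s3) - (s1 - s2) * (c1 - c3) <> 0.
Proof.
  intros h1 h2 h3 d12 d13 d23 HD.
  set (A1 := c2 - c1). set (A2 := s2 - s1). set (B1 := c3 - c1). set (B2 := s3 - s1).
  assert (h : A1 * B2 - A2 * B1 = 0) by (unfold A1, A2, B1, B2; lra).
  assert (hA : 2 * (c1 * A1 + s1 * A2) + (A1^2 + A2^2) = 0) by (unfold A1, A2; nra).
  assert (hB : 2 * (c1 * B1 + s1 * B2) + (B1^2 + B2^2) = 0) by (unfold B1, B2; nra).
  set (m := A1^2 + A2^2). set (k := A1 * B1 + A2 * B2).
  assert (mpos : 0 < m).
  { unfold m. destruct (Req_dec A1 0) as [z1|z1]; [destruct (Req_dec A2 0) as [z2|z2]|].
    - exfalso; apply d12; unfold A1, A2 in *; f_equal; lra.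
    - nra.
    - nra. }
  assert (e1 : m * B1 = k * A1).
  { assert (E : m * B1 - k * A1 = - A2 * (A1 * B2 - A2 * B1)) by (unfold m, k; ring).
    rewrite h in E; lra. }
  assert (e2 : m * B2 = k * A2).
  { assert (E : m * B2 - k * A2 = A1 * (A1 * B2 - A2 * B1)) by (unfold m, k; ring).
    rewrite h in E; lra. }
  assert (E : m * m * (2 * (c1 * B1 + s1 * B2) + (B1^2 + B2^2))
             = 2 * m * (c1 * (m * B1) + s1 * (m * B2)) + ((m * B1)^2 + (m * B2)^2)) by ring.
  rewrite hB in E. rewrite Rmult_0_r in E. rewrite e1, e2 in E.
  assert (E2 : 0 = m * k * (2 * (c1 * A1 + s1 * A2)) + k^2 * m) by (rewrite E at 1; unfold m; ring).
  assert (E3 : 0 = m * (k * (k - m))).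
  { assert (2 * (c1 * A1 + s1 * A2) = - m) by (unfold m; lra).
    rewrite H in E2. rewrite E2. ring. }
  assert (E4 : k * (k - m) = 0).
  { symmetry in E3; apply Rmult_integral in E3. destruct E3; [lra|assumption]. }
  apply Rmult_integral in E4. destruct E4 as [k0|km].
  - rewrite k0 in e1, e2. apply d13. unfold B1, B2 in *.
    assert (c3 - c1 = 0) by nra. assert (s3 - s1 = 0) by nra. f_equal; lra.
  - assert (k = m) by lra. rewrite H in e1, e2.
    apply d23. unfold A1, A2, B1, B2 in *.
    assert (c3 - c1 = c2 - c1) by (apply (Rmult_eq_reg_l m); lra).
    assert (s3 - s1 = s2 - s1) by (apply (Rmult_eq_reg_l m); lra).
    f_equal; lra.
Qed.

Lemma conic_pt (p a b e x y r : R) :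
  r = p - a * x - b * y -> r^2 = x^2 + y^2 -> a^2 + b^2 = e^2 ->
  p^2 - 2 * p * (a * x + b * y) - (b * x - a * y)^2 = (1 - e^2) * r^2.
Proof.
  intros Hr Hr2 Hab. rewrite <- Hab.
  replace ((1 - (a^2 + b^2)) * r^2) with (r * r - (a^2 + b^2) * r^2) by ring.
  rewrite Hr2. rewrite Hr. ring.
Qed.

Lemma core (p e c sn c1 s1 c2 s2 c3 s3 r1 r2 r3 x1 y1 x2 y2 x3 y3 : R)
  (hp : 0 < p) (he : 0 <= e) (hc : c^2 + sn^2 = 1)
  (hc1 : c1^2 + s1^2 = 1) (hc2 : c2^2 + s2^2 = 1) (hc3 : c3^2 + s3^2 = 1)
  (hr1 : 0 < r1) (hr2 : 0 < r2) (hr3 : 0 < r3)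
  (Hr1 : r1 * (1 + e * (c1 * c + s1 * sn)) = p)
  (Hr2 : r2 * (1 + e * (c2 * c + s2 * sn)) = p)
  (Hr3 : r3 * (1 + e * (c3 * c + s3 * sn)) = p)
  (Hx1 : x1 = r1 * c1) (Hy1 : y1 = r1 * s1)
  (Hx2 : x2 = r2 * c2) (Hy2 : y2 = r2 * s2)
  (Hx3 : x3 = r3 * c3) (Hy3 : y3 = r3 * s3)
  (d12 : (x1, y1) <> (x2, y2)) (d13 : (x1, y1) <> (x3, y3)) (d23 : (x2, y2) <> (x3, y3)) :
  let u := uvec x1 y1 r1 x2 y2 r2 in
  let v := uvec x1 y1 r1 x3 y3 r3 in
  let s := cross u v in
  v3 s <> 0 /\
  let X := v1 s / v3 s in
  let Y := v2 s / v3 s in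
  let Z2 := / r1 ^ 2 *
      (1 - 2 * X * x1 - 2 * Y * y1 - Y ^ 2 * x1 ^ 2
         + 2 * X * Y * x1 * y1 - X ^ 2 * y1 ^ 2) in
  0 < X ^ 2 + Y ^ 2 + Z2 /\
  p = 1 / sqrt (X ^ 2 + Y ^ 2 + Z2) /\
  e = sqrt ((X ^ 2 + Y ^ 2) / (X ^ 2 + Y ^ 2 + Z2)) /\
  (0 < e -> (c, sn) =
             (X / sqrt (X ^ 2 + Y ^ 2), Y / sqrt (X ^ 2 + Y ^ 2))) /\
  quad3 (conicC X Y Z2) (hom x1 y1) = 0 /\
  quad3 (conicC X Y Z2) (hom x2 y2) = 0 /\
  quad3 (conicC X Y Z2) (hom x3 y3) = 0.
Proof.
  set (a := e * c). set (b := e * sn).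
  assert (Hab : a^2 + b^2 = e^2) by (unfold a, b; nra).
  assert (L1 : r1 = p - a * x1 - b * y1) by (rewrite <- Hr1, Hx1, Hy1; unfold a, b; ring).
  assert (L2 : r2 = p - a * x2 - b * y2) by (rewrite <- Hr2, Hx2, Hy2; unfold a, b; ring).
  assert (L3 : r3 = p - a * x3 - b * y3) by (rewrite <- Hr3, Hx3, Hy3; unfold a, b; ring).
  assert (R1 : r1^2 = x1^2 + y1^2) by (rewrite Hx1, Hy1; nra).
  assert (R2 : r2^2 = x2^2 + y2^2) by (rewrite Hx2, Hy2; nra).
  assert (R3 : r3^2 = x3^2 + y3^2) by (rewrite Hx3, Hy3; nra).
  assert (dd : forall ci si cj sj ri rj xi yi xj yj,
    0 < ri -> 0 < rj ->
    ri * (1 + e * (ci * c + si * sn)) = p -> rj * (1 + e * (cj * c + sj * sn)) = p ->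
    xi = ri * ci -> yi = ri * si -> xj = rj * cj -> yj = rj * sj ->
    (xi, yi) <> (xj, yj) -> (ci, si) <> (cj, sj)).
  { intros ci si cj sj ri rj xi yi xj yj hi hj Hi Hj -> -> -> -> D E.
    injection E as -> ->. apply D.
    assert (ri = rj).
    { assert (K : 0 < 1 + e * (cj * c + sj * sn)).
      { apply (Rmult_lt_reg_l ri); [lra|]. rewrite Hi. nra. }
      apply (Rmult_eq_reg_r (1 + e * (cj * c + sj * sn))); [|lra]. lra. }
    subst; reflexivity. }
  assert (D : (c1 - c2) * (s1 - s3) - (s1 - s2) * (c1 - c3) <> 0).
  { apply circle3; auto.
    - eapply (dd c1 s1 c2 s2 r1 r2); eauto.
    - eapply (dd c1 s1 c3 s3 r1 r3); eauto.
    - eapply (dd c2 s2 c3 s3 r2 r3); eauto. }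
  intros u v s.
  assert (S3 : v3 s = (r1 + r2) * (r1 + r3) * (r1 * r2) * (r1 * r3)
                      * ((c1 - c2) * (s1 - s3) - (s1 - s2) * (c1 - c3))).
  { unfold s, u, v, cross, uvec, scale3, v1, v2, v3; simpl.
    rewrite Hx1, Hy1, Hx2, Hy2, Hx3, Hy3. ring. }
  assert (s3nz : v3 s <> 0).
  { rewrite S3. apply Rmult_integral_contrapositive; split; [|exact D].
    apply Rgt_not_eq. apply Rmult_lt_0_compat; [apply Rmult_lt_0_compat; [apply Rmult_lt_0_compat|]|]; nra. }
  split; [exact s3nz|].
  assert (Pu : a * v1 u + b * v2 u + p * v3 u = 0).
  { unfold u, uvec, scale3, v1, v2, v3; simpl.
    replace (a * ((r1 + r2) * (r2 * x1 - r1 * x2)) + b * ((r1 + r2) * (r2 * y1 - r1 * y2)) +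
             p * ((r1 + r2) * (r1 - r2)))
      with ((r1 + r2) * (r2 * (a * x1 + b * y1) - r1 * (a * x2 + b * y2) + p * (r1 - r2))) by ring.
    replace (a * x1 + b * y1) with (p - r1) by lra.
    replace (a * x2 + b * y2) with (p - r2) by lra. ring. }
  assert (Pv : a * v1 v + b * v2 v + p * v3 v = 0).
  { unfold v, uvec, scale3, v1, v2, v3; simpl.
    replace (a * ((r1 + r3) * (r3 * x1 - r1 * x3)) + b * ((r1 + r3) * (r3 * y1 - r1 * y3)) +
             p * ((r1 + r3) * (r1 - r3)))
      with ((r1 + r3) * (r3 * (a * x1 + b * y1) - r1 * (a * x3 + b * y3) + p * (r1 - r3))) by ring.
    replace (a * x1 + b * y1) with (p - r1) by lra.
    replace (a * x3 + b * y3) with (p - r3) by lra. ring. }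
  destruct (cross_par u v a b p Pu Pv) as [C1 C2]. fold s in C1, C2.
  intros X Y.
  assert (HX : X = a / p) by (unfold X; apply (Rmult_eq_reg_r (v3 s * p)); [field_simplify; [|lra|lra]; lra | nra]).
  assert (HY : Y = b / p) by (unfold Y; apply (Rmult_eq_reg_r (v3 s * p)); [field_simplify; [|lra|lra]; lra | nra]).
  clearbody X Y. subst X Y.
  intros Z2.
  assert (HZ : Z2 = (1 - e^2) / p^2).
  { unfold Z2.
    replace (1 - 2 * (a / p) * x1 - 2 * (b / p) * y1 - (b / p) ^ 2 * x1 ^ 2 +
      2 * (a / p) * (b / p) * x1 * y1 - (a / p) ^ 2 * y1 ^ 2)
      with ((p^2 - 2 * p * (a * x1 + b * y1) - (b * x1 - a * y1)^2) / p^2) by (field; lra).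
    rewrite (conic_pt p a b e x1 y1 r1 L1 R1 Hab). field. lra. }
  clearbody Z2. subst Z2.
  assert (Sum : (a/p)^2 + (b/p)^2 + (1 - e^2)/p^2 = (1/p)^2).
  { replace ((a/p)^2 + (b/p)^2) with ((a^2+b^2)/p^2) by (field; lra). rewrite Hab. field; lra. }
  rewrite Sum.
  assert (ip : 0 < 1/p) by (apply Rdiv_lt_0_compat; lra).
  assert (qz : forall x y r, r = p - a * x - b * y -> r^2 = x^2 + y^2 ->
     quad3 (conicC (a / p) (b / p) ((1 - e ^ 2) / p ^ 2)) (hom x y) = 0).
  { intros x y r Hr Hr2'.
    unfold quad3, conicC, mulmv3, dot3, hom, v1, v2, v3; simpl.
    pose proof (conic_pt p a b e x y r Hr Hr2' Hab) as K.
    apply (Rmult_eq_reg_r (p^2)); [|apply pow_nonzero; lra].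
    rewrite Rmult_0_l. field_simplify; [|lra].
    replace 0 with (0 / p^2) by (field; lra).
    unfold Rdiv; rewrite Rmult_0_l. rewrite Hr2' in K. nra. }
  split; [nra|].
  split; [rewrite sqrt_pow2; [field; lra | lra]|].
  split.
  { replace ((a/p)^2 + (b/p)^2) with (e^2/p^2) by (rewrite <- Hab; field; lra).
    replace (e^2/p^2/(1/p)^2) with (e^2) by (field; lra).
    rewrite sqrt_pow2; lra. }
  split.
  { intros epos.
    replace ((a/p)^2 + (b/p)^2) with ((e/p)^2) by (replace ((e/p)^2) with (e^2/p^2) by (field; lra); rewrite <- Hab; field; lra).
    rewrite sqrt_pow2; [|apply Rlt_le, Rdiv_lt_0_compat; lra].
    unfold a, b. f_equal; field; lra. }
  split; [eapply qz; eauto|]. split; eapply qz; eauto.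
Qed.
Theorem mainTheorem1 (p e om phi1 phi2 phi3 : R)
  (hp : 0 < p) (he : 0 <= e)
  (h1 : 0 < 1 + e * cos (phi1 - om))
  (h2 : 0 < 1 + e * cos (phi2 - om))
  (h3 : 0 < 1 + e * cos (phi3 - om)) :
  let r1 := p / (1 + e * cos (phi1 - om)) in
  let r2 := p / (1 + e * cos (phi2 - om)) in
  let r3 := p / (1 + e * cos (phi3 - om)) in
  let x1 := r1 * cos phi1 in let y1 := r1 * sin phi1 in
  let x2 := r2 * cos phi2 in let y2 := r2 * sin phi2 in
  let x3 := r3 * cos phi3 in let y3 := r3 * sin phi3 in
  (x1, y1) <> (x2, y2) -> (x1, y1) <> (x3, y3) -> (x2, y2) <> (x3, y3) ->
  let u := uvec x1 y1 r1 x2 y2 r2 in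
  let v := uvec x1 y1 r1 x3 y3 r3 in
  let s := cross u v in
  v3 s <> 0 /\
  let X := v1 s / v3 s in
  let Y := v2 s / v3 s in
  let Z2 := / r1 ^ 2 *
      (1 - 2 * X * x1 - 2 * Y * y1 - Y ^ 2 * x1 ^ 2
         + 2 * X * Y * x1 * y1 - X ^ 2 * y1 ^ 2) in
  0 < X ^ 2 + Y ^ 2 + Z2 /\
  p = 1 / sqrt (X ^ 2 + Y ^ 2 + Z2) /\
  e = sqrt ((X ^ 2 + Y ^ 2) / (X ^ 2 + Y ^ 2 + Z2)) /\
  (0 < e -> (cos om, sin om) =
             (X / sqrt (X ^ 2 + Y ^ 2), Y / sqrt (X ^ 2 + Y ^ 2))) /\
  quad3 (conicC X Y Z2) (hom x1 y1) = 0 /\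
  quad3 (conicC X Y Z2) (hom x2 y2) = 0 /\
  quad3 (conicC X Y Z2) (hom x3 y3) = 0.
Proof.
  intros r1 r2 r3 x1 y1 x2 y2 x3 y3 d12 d13 d23.
  assert (rr : forall phi, 0 < 1 + e * cos (phi - om) ->
     0 < p / (1 + e * cos (phi - om)) /\
     p / (1 + e * cos (phi - om)) * (1 + e * (cos phi * cos om + sin phi * sin om)) = p).
  { intros phi h. split; [apply Rdiv_lt_0_compat; lra|].
    rewrite <- cos_minus. field. lra. }
  destruct (rr phi1 h1) as [a1 b1]. destruct (rr phi2 h2) as [a2 b2].
  destruct (rr phi3 h3) as [a3 b3].
  exact (core p e (cos om) (sin om) (cos phi1) (sin phi1) (cos phi2) (sin phi2)
    (cos phi3) (sin phi3) r1 r2 r3 x1 y1 x2 y2 x3 y3 hp he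
    ltac:(rewrite <- !Rsqr_pow2; apply sin2_cos2 || (rewrite Rplus_comm; apply sin2_cos2))
    ltac:(rewrite <- !Rsqr_pow2; rewrite Rplus_comm; apply sin2_cos2)
    ltac:(rewrite <- !Rsqr_pow2; rewrite Rplus_comm; apply sin2_cos2)
    ltac:(rewrite <- !Rsqr_pow2; rewrite Rplus_comm; apply sin2_cos2)
    a1 a2 a3 b1 b2 b3 eq_refl eq_refl eq_refl eq_refl eq_refl eq_refl d12 d13 d23).
Qed.
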